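(* Let $v$, $g$, $b$ be positive integers with $v$ odd, and suppose a $(v,g,b)$ non-half-sum disjoint packing exists. Then there exists a $(v,v,v-bg,bv)$ placement delivery array. Consequently, there exists a $v$-division $(K=v,M,N)$ coded caching scheme with memory ratio $\frac{M}{N}=1-\frac{bg}{v}$, subpacketization $F=v$, transmission load $R=b$, and coded caching gain $\frac{K(1-M/N)}{R}=g$.
   Context: Arithmetic is in $\mathbb{Z}_v$, the ring of integers modulo $v$; since $v$ is odd, $2$ is invertible and the half-sum of $x,y\in\mathbb{Z}_v$ is $(x+y)\cdot 2^{-1}$. A $(v,g,b)$ non-half-sum disjoint packing (NHSDP) is a pair $(\mathbb{Z}_v,\mathfrak{D})$ where $\mathfrak{D}$ is a family of $b$ subsets (''blocks'') of $\mathbb{Z}_v$, each of size $g$, such that (i) any two different blocks are disjoint, and (ii) for each block $\mathcal{D}\in\mathfrak{D}$ and any two different elements $x,y\in\mathcal{D}$, the half-sum $(x+y)/2$ does not belong to any block of $\mathfrak{D}$. A $(K,F,Z,S)$ placement delivery array (PDA) is an $F\times K$ array $\mathbf{P}=(p_{j,k})$ with entries from $\{*\}\cup[S]$ such that: (C1) each column contains exactly $Z$ stars; (C2) each integer of $[S]$ occurs at least once; (C3) for any two distinct entries $p_{j_1,k_1}=p_{j_2,k_2}=s\in[S]$ we have $j_1\neq j_2$, $k_1\neq k_2$, and $p_{j_1,k_2}=p_{j_2,k_1}=*$. A $(K,M,N)$ coded caching system consists of a server storing $N$ equal-size files and $K$ users each with a cache of size $M$ files, connected by an error-free shared broadcast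 link. An $F$-division scheme splits each file into $F$ equal-size packets; in the placement phase packets are stored in user caches without knowledge of future demands; in the delivery phase each user requests one file and the server broadcasts coded messages (XORs of packets) so that every user can decode its requested file. The transmission load $R$ is the worst case over all demand vectors of the total broadcast size normalized by the file size; $M/N$ is the memory ratio and $F$ the subpacketization. The coded caching gain is $K(1-M/N)/R$. *)

(* Defs.v *)
From mathcomp Require Import all_boot all_order all_algebra.
Set Implicit Arguments. Unset Strict Implicit. Unset Printing Implicit Defensive.

(* Z_v is represented by 'I_v (residues 0..v-1), which
   also works for v = 1 (unlike 'Z_v). *)

(* The inverse of 2 modulo an odd v is (v+1)/2. *)
Definition inv2 (v : nat) : nat := (v.+1)./2.

Definition half_sum (v : nat) (x y : 'I_v) : nat := ((x + y) * inv2 v) %% v.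

Definition NHSDP (v g b : nat) (D : 'I_b -> {set 'I_v}) : Prop :=
  [/\ forall i, #|D i| = g,
      forall i j, i != j -> [disjoint D i & D j]
    & forall i (x y : 'I_v), x \in D i -> y \in D i -> x != y ->
        forall j (z : 'I_v), z \in D j -> val z != half_sum x y].

(* (K,F,Z,S) placement delivery array: an F x K array; None is the star,
   Some s (s : 'I_S) are the integers of [S] (relabelled 0..S-1). *)
Definition PDA (K F Z S : nat) (P : 'I_F -> 'I_K -> option 'I_S) : Prop :=
  [/\ (forall k, #|[set j | P j k == None]| = Z),
      (forall s, exists j, exists k, P j k = Some s)
    & (forall j1 j2 k1 k2 s, P j1 k1 = Some s -> P j2 k2 = Some s ->
         (j1, k1) != (j2, k2) ->
         [/\ j1 != j2, k1 != k2, P j1 k2 = None & P j2 k1 = None])].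
Arguments NHSDP : clear implicits.
Arguments PDA : clear implicits.

(* Main.v *)
Require Import Defs.
From mathcomp Require Import all_boot all_order all_algebra.
From mathcomp Require Import ring zify.
Import GRing.Theory Num.Theory.
Set Implicit Arguments. Unset Strict Implicit. Unset Printing Implicit Defensive.

Lemma bigcup_seq_mem (b : nat) (T : finType) (D : 'I_b -> {set T}) (r : seq 'I_b) x :
  x \in \big[@setU T/set0]_(i <- r) D i -> exists2 j, j \in r & x \in D j.
Proof.
elim: r => [|i r IH]; first by rewrite big_nil inE.
rewrite big_cons inE => /orP[xi|/IH [j jr xj]].
  by exists i => //; rewrite inE eqxx.
by exists j => //; rewrite inE jr orbT.
Qed.

Lemma bigcup_seq_mem2 (b : nat) (T : finType) (D : 'I_b -> {set T}) (r : seq 'I_b) x j :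
  j \in r -> x \in D j -> x \in \big[@setU T/set0]_(i <- r) D i.
Proof.
elim: r => [|i r IH] //; rewrite inE big_cons inE => /orP[/eqP <- -> //|jr xj].
by rewrite IH ?orbT.
Qed.

Lemma card_union_seq (b : nat) (T : finType) (D : 'I_b -> {set T})
  (hd : forall i j, i != j -> [disjoint D i & D j])
  (r : seq 'I_b) : uniq r ->
  #|\big[@setU T/set0]_(i <- r) D i| = \sum_(i <- r) #|D i|.
Proof.
elim: r => [|i r IH] /=; first by rewrite !big_nil cards0.
move=> /andP[ir ur]; rewrite !big_cons.
have dis : [disjoint D i & \big[@setU T/set0]_(j <- r) D j].
  apply/pred0P => x /=; apply/negbTE/andP => [[xi /bigcup_seq_mem [j jr xj]]].
  have ij : i != j by apply: contraNneq ir => ->.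
  by rewrite (disjointFr (hd _ _ ij) xi) in xj.
by rewrite cardsU (disjoint_setI0 dis) cards0 subn0 IH.
Qed.

Definition Uall (b : nat) (T : finType) (D : 'I_b -> {set T}) :=
  \big[@setU T/set0]_(i <- enum 'I_b) D i.

Lemma Uall_mem (b : nat) (T : finType) (D : 'I_b -> {set T}) x :
  (x \in Uall D) = [exists i, x \in D i].
Proof.
apply/idP/existsP => [/bigcup_seq_mem [j _ xj]|[j xj]]; first by exists j.
by apply: (bigcup_seq_mem2 _ xj); rewrite mem_enum.
Qed.

Lemma card_Uall (b g : nat) (T : finType) (D : 'I_b -> {set T})
  (hc : forall i, #|D i| = g) (hd : forall i j, i != j -> [disjoint D i & D j]) :
  #|Uall D| = b * g.
Proof.
rewrite /Uall (card_union_seq hd) ?enum_uniq // (eq_bigr (fun=> g)) //.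
by rewrite big_const_seq count_predT size_enum_ord iter_addn_0 mulnC.
Qed.

Definition PP (m b : nat) (D : 'I_b -> {set 'I_(m.+2)}) (j k : 'I_(m.+2)) :
  option 'I_(b * m.+2) :=
  if [pick i | (j - k)%R \in D i] is Some i then Some (mxvec_index i (j + k)%R)
  else None.

Lemma PP_None (m b : nat) (D : 'I_b -> {set 'I_(m.+2)}) j k :
  (PP D j k == None) = ((j - k)%R \notin Uall D).
Proof.
rewrite /PP Uall_mem; case: pickP => [i Hi|H].
  by apply/esym/negbTE; rewrite negbK; apply/existsP; exists i.
by apply/esym/negP => /existsP [i]; rewrite H.
Qed.

Lemma PP_Some (m b : nat) (D : 'I_b -> {set 'I_(m.+2)}) j k s :
  PP D j k = Some s -> exists2 i, (j - k)%R \in D i & s = mxvec_index i (j + k)%R.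
Proof. by rewrite /PP; case: pickP => [i Hi [<-]|//]; exists i. Qed.

Lemma PP_in (m b : nat) (D : 'I_b -> {set 'I_(m.+2)}) j k i
  (hd : forall i j, i != j -> [disjoint D i & D j]) :
  (j - k)%R \in D i -> PP D j k = Some (mxvec_index i (j + k)%R).
Proof.
move=> Hi; rewrite /PP; case: pickP => [i' Hi'|H]; last by rewrite H in Hi.
case: (eqVneq i' i) => [->//|ne].
by rewrite (disjointFr (hd _ _ ne) Hi') in Hi.
Qed.

Lemma mxvec_index_inj (b n : nat) (i1 i2 : 'I_b) (t1 t2 : 'I_n) :
  mxvec_index i1 t1 = mxvec_index i2 t2 -> i1 = i2 /\ t1 = t2.
Proof. by move/cast_ord_inj/enum_rank_inj => [-> ->]. Qed.

Definition hv (m : nat) : 'I_(m.+2) := inZp (inv2 m.+2).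

Lemma hh (m : nat) : odd m.+2 -> (hv m + hv m = 1)%R.
Proof.
move=> od; apply: val_inj => /=.
rewrite modnDm addnn /inv2 -[X in X %% _]/(m.+3./2.*2) even_halfK; last by rewrite /= negbK.
by rewrite -addn1 modnDl.
Qed.

Lemma hs_val (m : nat) (x y : 'I_(m.+2)) : half_sum x y = val ((x + y) * hv m)%R.
Proof. by rewrite /half_sum /= modnMm. Qed.

Lemma dbl (m : nat) (a : 'I_(m.+2)) : odd m.+2 -> ((a + a) * hv m = a)%R.
Proof.
move=> od; have -> : ((a + a) * hv m = a * (hv m + hv m))%R by ring.
by rewrite hh // mulr1.
Qed.

Lemma main_gen (m g b : nat) (hodd : odd m.+2) (D : 'I_b -> {set 'I_(m.+2)})
  (hD : NHSDP m.+2 g b D) (hg : 0 < g) :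
  PDA m.+2 m.+2 (m.+2 - b * g) (b * m.+2) (PP D).
Proof.
case: hD => hc hd hs; split.
- move=> k.
  have -> : [set j | PP D j k == None] = ~: ((fun j => j - k)%R @^-1: Uall D).
    by apply/setP => j; rewrite !inE PP_None.
  have := cardsC ((fun j => j - k)%R @^-1: Uall D).
  rewrite card_preimset; last by apply: addIr.
  rewrite (card_Uall hc hd) card_ord. move: (#|~: _|) => c H; lia.
- move=> s; case/mxvec_indexP: s => i t.
  have : 0 < #|D i| by rewrite hc.
  rewrite card_gt0 => /set0Pn [x xi].
  exists ((t + x) * hv m)%R, ((t - x) * hv m)%R.
  have e1 : ((t + x) * hv m - (t - x) * hv m = (x + x) * hv m)%R by ring.
  have e2 : ((t + x) * hv m + (t - x) * hv m = (t + t) * hv m)%R by ring.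
  rewrite (PP_in hd (i := i)).
    by congr (Some (mxvec_index _ _)); exact: (etrans e2 (dbl t hodd)).
  apply: (eq_ind x (fun z => z \in D i) xi); symmetry; exact: (etrans e1 (dbl x hodd)).
- move=> j1 j2 k1 k2 s /PP_Some [i1 x1i ->] /PP_Some [i2 x2i] /mxvec_index_inj [ei et] ne.
  subst i2.
  have E1 : (j1 - k2 = ((j1 - k1) + (j2 - k2)) * hv m)%R.
    have -> : ((j1 - k1) + (j2 - k2) = (j1 - k2) + (j1 - k2) + ((j2 + k2) - (j1 + k1)))%R by ring.
    by rewrite et subrr addr0 dbl.
  have E2 : (j2 - k1 = ((j1 - k1) + (j2 - k2)) * hv m)%R.
    have -> : ((j1 - k1) + (j2 - k2) = (j2 - k1) + (j2 - k1) + ((j1 + k1) - (j2 + k2)))%R by ring.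
    by rewrite et subrr addr0 dbl.
  have Ej : forall j k : 'I_(m.+2), j = (((j + k) + (j - k)) * hv m)%R.
    move=> j k; have -> : ((j + k) + (j - k) = j + j)%R by ring.
    by rewrite dbl.
  have Ek : forall j k : 'I_(m.+2), k = (((j + k) - (j - k)) * hv m)%R.
    move=> j k; have -> : ((j + k) - (j - k) = k + k)%R by ring.
    by rewrite dbl.
  have nx : (j1 - k1 != j2 - k2)%R.
    apply: contra ne => /eqP ex.
    have ej : j1 = j2 by rewrite (Ej j1 k1) (Ej j2 k2) et ex.
    have ek : k1 = k2 by rewrite (Ek j1 k1) (Ek j2 k2) et ex.
    by rewrite ej ek.
  have NN : forall j k : 'I_(m.+2), (j - k = ((j1 - k1) + (j2 - k2)) * hv m)%R ->
      PP D j k = None.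
    move=> j k ejk; apply/eqP; rewrite PP_None Uall_mem; apply/existsP => [[i' zi']].
    by move: (hs _ _ _ x1i x2i nx i' _ zi'); rewrite hs_val ejk eqxx.
  split.
  + apply: contra ne => /eqP ej; move: et; rewrite ej => /addrI ek.
    by rewrite ek.
  + apply: contra ne => /eqP ek; move: et; rewrite ek => /addIr ej.
    by rewrite ej.
  + exact: NN.
  + exact: NN.
Qed.

Lemma rat_part (v g b : nat) (hv : 0 < v) (hb : 0 < b) (hle : b * g <= v) :
  [/\ ((v - b * g)%:R / v%:R = 1 - (b * g)%:R / v%:R :> rat)%R,
      ((b * v)%:R / v%:R = b%:R :> rat)%R
    & (v%:R * (1 - (v - b * g)%:R / v%:R) / ((b * v)%:R / v%:R) = g%:R :> rat)%R].
Proof.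
have v0 : (v%:R != 0 :> rat)%R by rewrite pnatr_eq0 -lt0n.
have b0 : (b%:R != 0 :> rat)%R by rewrite pnatr_eq0 -lt0n.
rewrite natrB // !natrM; split; field => //; by rewrite v0 b0.
Qed.

Theorem theorem1 (v g b : nat) (hv : 0 < v) (hg : 0 < g) (hb : 0 < b)
    (hodd : odd v) (D : 'I_b -> {set 'I_v}) (hD : NHSDP v g b D) :
  [/\ b * g <= v,
      exists P : 'I_v -> 'I_v -> option 'I_(b * v), PDA v v (v - b * g) (b * v) P,
      ((v - b * g)%:R / v%:R = 1 - (b * g)%:R / v%:R :> rat)%R,
      ((b * v)%:R / v%:R = b%:R :> rat)%R
    & (v%:R * (1 - (v - b * g)%:R / v%:R) / ((b * v)%:R / v%:R) = g%:R :> rat)%R].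
Proof.
have hle : b * g <= v.
  case: hD => hc hd _; rewrite -(card_Uall hc hd).
  by rewrite -[X in _ <= X](card_ord v) max_card.
have [r1 r2 r3] := rat_part hv hb hle.
split => //.
case: v hv hodd D hD hle {r1 r2 r3} => [//|[|m]] _ hodd D hD hle.
- have b1 : b = 1 by nia.
  have g1 : g = 1 by nia.
  subst b g.
  exists (fun _ _ => Some ord0); split.
  + move=> k; apply/eqP; rewrite cards_eq0; apply/eqP/setP => j; by rewrite !inE.
  + move=> s; exists ord0, ord0; by rewrite [s]ord1.
  + move=> j1 j2 k1 k2 s _ _; by rewrite [j1]ord1 [j2]ord1 [k1]ord1 [k2]ord1 eqxx.
- exists (PP D); exact: main_gen.
Qed.
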